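(* Let $n\ge2$ be even. The permutation representation of $S_n$ over $\mathbb{C}$ arising from the action of $S_n$ (by $\pi\cdot S=\pi(S)$) on the set of even-sized subsets of $\{1,\dots,n\}$ unites conjugacy classes; specifically, $\sigma=(1,2)(3,4)\cdots(n-1,n)$ and $\tau=(1)(2)(3,4)\cdots(n-1,n)$ are not conjugate in $S_n$ but have similar images.
   Context: A representation $T$ of $G$ unites conjugacy classes if there are non-conjugate $\sigma,\tau\in G$ with $T(\sigma),T(\tau)$ similar matrices. *)

(* Defs.v *)
From HB Require Import structures.
From mathcomp Require Import all_boot all_order all_algebra all_fingroup all_field.
Set Implicit Arguments. Unset Strict Implicit. Unset Printing Implicit Defensive.
Import GRing.Theory Num.Theory.
Local Open Scope ring_scope.

(* Points are 'I_n = {0,..,n-1}; paper's point k corresponds to ordinal k-1. *)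

Definition even_subsets (n : nat) : {set {set 'I_n}} :=
  [set A : {set 'I_n} | ~~ odd #|A|].

(* Permutation representation of S_n over C (algC) on the even-sized subsets:
   basis vector e_S (S even-sized, enumerated via enum_val) is sent to
   e_{pi(S)}, i.e. entry (i,j) is 1 iff S_i = pi(S_j). *)
Definition even_subset_rep (n : nat) (pi : {perm 'I_n})
  : 'M[algC]_(#|even_subsets n|) :=
  \matrix_(i, j) ((pi @: (enum_val j : {set 'I_n}) == enum_val i)%:R).

Definition unites_classes (n m : nat) (T : {perm 'I_n} -> 'M[algC]_m) : Prop :=
  exists sigma tau : {perm 'I_n},
    sigma \notin (tau ^: [set: {perm 'I_n}])%g /\ similar_in unitmx (T sigma) (T tau).

(* swap 2k <-> 2k+1 (0-indexed), i.e. (1,2)(3,4)... in 1-indexed notation;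
   an unpaired last point (n odd) is fixed. *)
Definition pairswap_fun (n : nat) (i : 'I_n) : 'I_n :=
  insubd i (if odd i then i.-1 else i.+1).

Lemma pairswap_funK n : involutive (@pairswap_fun n).
Proof.
move=> i; apply: val_inj; rewrite /pairswap_fun.
set j := insubd i _.
have Ej : (j : nat) = if ((if odd i then i.-1 else i.+1) < n)%N
                  then (if odd i then i.-1 else i.+1) else val i.
  by rewrite /j val_insubd.
rewrite val_insubd !Ej.
have lti := ltn_ord i.
case Oi: (odd i).
- have i0 : (0 < i)%N by case: (nat_of_ord i) Oi.
  have Oi' : odd i.-1 = false by move: Oi; rewrite -{1}(prednK i0) /= => /negbTE.
  have lt1 : (i.-1 < n)%N by apply: leq_ltn_trans (leq_pred i) lti.
  by rewrite lt1 Oi' (prednK i0) lti.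
- case: (ltnP i.+1 n) => H.
  + by rewrite /= Oi /= lti.
  + have -> : odd (val i) = false by exact: Oi.
    have -> : ((val i).+1 < n)%N = false by rewrite ltnNge H.
    by rewrite /j val_insubd Oi ltnNge H.
Qed.

Definition sigma_pairs (n : nat) : {perm 'I_n} := perm (can_inj (@pairswap_funK n)).

Definition tau_fun (n : nat) (i : 'I_n) : 'I_n :=
  if (i < 2)%N then i else pairswap_fun i.

Lemma tau_funK n : involutive (@tau_fun n).
Proof.
move=> i; rewrite /tau_fun; case Hi: (i < 2)%N; first by rewrite Hi.
have Hj : (pairswap_fun i < 2)%N = false.
  rewrite /pairswap_fun val_insubd.
  move: Hi; case: ifP => _; last by [].
  move: (nat_of_ord i) => k.
  by case: k => [|[|[|k]]] //=; case: (odd k).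
by rewrite Hj pairswap_funK.
Qed.

Definition tau_pairs (n : nat) : {perm 'I_n} := perm (can_inj (@tau_funK n)).

(* Main.v *)
Require Import Defs.
From HB Require Import structures.
From mathcomp Require Import all_boot all_order all_algebra all_fingroup all_field.
From mathcomp Require Import zify.
Set Implicit Arguments. Unset Strict Implicit. Unset Printing Implicit Defensive.
Import GRing.Theory Num.Theory.
Local Open Scope ring_scope.

Section S.
Variable m : nat.
Hypothesis hm : ~~ odd m.
Local Notation n := m.+2.

Lemma ps_val (i : 'I_n) : val (pairswap_fun i) = if odd i then i.-1 else i.+1.
Proof.
rewrite /pairswap_fun val_insubd; case Oi: (odd i).
  by rewrite (leq_ltn_trans (leq_pred _) (ltn_ord i)).
suff -> : (i.+1 < n)%N by [].
rewrite ltn_neqAle ltn_ord andbT; apply/eqP => h.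
have := congr1 odd h; rewrite /= Oi /= => e.
by move: hm; rewrite negbK in e; rewrite -e.
Qed.

Definition sg := sigma_pairs n.
Definition tu := tau_pairs n.

Lemma sg_val (i : 'I_n) : val (sg i) = if odd i then i.-1 else i.+1.
Proof. by rewrite /sg /sigma_pairs permE ps_val. Qed.

Lemma tu_val (i : 'I_n) : val (tu i) = if (i < 2)%N then val i else if odd i then i.-1 else i.+1.
Proof. rewrite /tu /tau_pairs permE /tau_fun; case: ifP => //; by rewrite ps_val. Qed.

Definition P0 : {set 'I_n} := [set x : 'I_n | (x < 2)%N].
Definition E' : {set 'I_n} := [set x : 'I_n | ~~ odd x & (2 <= x)%N].
Definition O' : {set 'I_n} := [set x : 'I_n | odd x & (2 <= x)%N].

Definition good (p : {perm 'I_n}) :=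
  [/\ forall x, p (p x) = x, forall x, (p x \in P0) = (x \in P0)
    & forall x, (p x \in E') = (x \in O')].

Lemma good_sg : good sg.
Proof.
split=> x.
- by rewrite /sg /sigma_pairs !permE pairswap_funK.
- rewrite /P0 /E' /O' !inE sg_val; case: x => [[|[|k]] hk] //=; case: k hk => [|k] hk //=; case Ok: (odd k); rewrite /= ?Ok //.
- rewrite /P0 /E' /O' !inE sg_val; case: x => [[|[|k]] hk] //=; case: k hk => [|k] hk //=; case Ok: (odd k); rewrite /= ?Ok //.
Qed.

Lemma good_tu : good tu.
Proof.
split=> x.
- by rewrite /tu /tau_pairs !permE tau_funK.
- rewrite /P0 /E' /O' !inE tu_val; case: x => [[|[|k]] hk] //=; case: k hk => [|k] hk //=; case Ok: (odd k); rewrite /= ?Ok //.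
- rewrite /P0 /E' /O' !inE tu_val; case: x => [[|[|k]] hk] //=; case: k hk => [|k] hk //=; case Ok: (odd k); rewrite /= ?Ok //.
Qed.

Section Good.
Variable p : {perm 'I_n}.
Hypothesis gp : good p.

Lemma mem_im (S : {set 'I_n}) y : (y \in p @: S) = (p y \in S).
Proof.
case: gp => p1 _ _; apply/imsetP/idP => [[x hx ->]|hy]; first by rewrite p1.
by exists (p y); rewrite ?p1.
Qed.

Lemma card_im (S : {set 'I_n}) : #|p @: S| = #|S|.
Proof. exact: card_imset perm_inj. Qed.

Lemma imK (S : {set 'I_n}) : p @: (p @: S) = S.
Proof. by apply/setP => y; rewrite !mem_im; case: gp => ->. Qed.

Lemma P0_im (S : {set 'I_n}) : #|(p @: S) :&: P0| = #|S :&: P0|.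
Proof.
case: gp => _ p2 _.
suff -> : (p @: S) :&: P0 = p @: (S :&: P0) by rewrite card_im.
by apply/setP => y; rewrite in_setI !mem_im in_setI p2.
Qed.

Lemma E_im (S : {set 'I_n}) : #|(p @: S) :&: E'| = #|S :&: O'|.
Proof.
case: gp => p1 _ p3.
suff -> : (p @: S) :&: E' = p @: (S :&: O') by rewrite card_im.
by apply/setP => y; rewrite in_setI !mem_im in_setI -p3 p1.
Qed.
End Good.

Lemma part (S : {set 'I_n}) : #|S| = (#|S :&: P0| + #|S :&: E'| + #|S :&: O'|)%N.
Proof.
rewrite -(cardsID P0 S) -(cardsID E' (S :\: P0)) addnA.
congr (_ + _ + _)%N; apply: eq_card => x; rewrite /P0 /E' /O' !inE;
  case: (odd x); case: (ltnP x 2); by rewrite ?andbT ?andbF.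
Qed.

Definition o0 : 'I_n := ord0.
Definition o1 : 'I_n := @Ordinal n 1 isT.

Definition ev (S : {set 'I_n}) := ~~ odd #|S|.
Definition aS (S : {set 'I_n}) := odd #|S :&: P0|.
Definition cS (S : {set 'I_n}) := odd #|S :&: E'|.

Lemma memP0 x : (x \in P0) = (x == o0) || (x == o1).
Proof. by rewrite /P0 inE -!val_eqE /=; case: x => [[|[|k]] hk]. Qed.

Lemma cardP0 (S : {set 'I_n}) : #|S :&: P0| = ((o0 \in S) + (o1 \in S))%N.
Proof.
have o01 : o0 != o1 by rewrite -val_eqE.
case h0: (o0 \in S); case h1: (o1 \in S).
- rewrite (_ : S :&: P0 = [set o0; o1]) ?cards2 ?o01 //.
  apply/setP => x; rewrite in_setI memP0 !inE.
  case: (eqVneq x o0) => [->|n0]; [|case: (eqVneq x o1) => [->|n1]];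
  by rewrite ?eqxx ?(negbTE o01) ?(negbTE n0) ?(negbTE n1) 1?eq_sym ?(negbTE o01) ?h0 ?h1 ?andbF ?andbT ?orbT ?orbF.
- rewrite (_ : S :&: P0 = [set o0]) ?cards1 //.
  apply/setP => x; rewrite in_setI memP0 !inE.
  case: (eqVneq x o0) => [->|n0]; [|case: (eqVneq x o1) => [->|n1]];
  by rewrite ?eqxx ?(negbTE o01) ?(negbTE n0) ?(negbTE n1) 1?eq_sym ?(negbTE o01) ?h0 ?h1 ?andbF ?andbT ?orbT ?orbF.
- rewrite (_ : S :&: P0 = [set o1]) ?cards1 //.
  apply/setP => x; rewrite in_setI memP0 !inE.
  case: (eqVneq x o0) => [->|n0]; [|case: (eqVneq x o1) => [->|n1]];
  by rewrite ?eqxx ?(negbTE o01) ?(negbTE n0) ?(negbTE n1) 1?eq_sym ?(negbTE o01) ?h0 ?h1 ?andbF ?andbT ?orbT ?orbF.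
- rewrite (_ : S :&: P0 = set0) ?cards0 //.
  apply/setP => x; rewrite in_setI memP0 !inE.
  case: (eqVneq x o0) => [->|n0]; [|case: (eqVneq x o1) => [->|n1]];
  by rewrite ?eqxx ?(negbTE o01) ?(negbTE n0) ?(negbTE n1) 1?eq_sym ?(negbTE o01) ?h0 ?h1 ?andbF ?andbT ?orbT ?orbF.
Qed.

Lemma c_flip p (gp : good p) (S : {set 'I_n}) : ev S -> aS S -> cS (p @: S) = ~~ cS S.
Proof.
rewrite /cS E_im // /ev /aS (part S) !oddD => he ha; move: he; rewrite ha.
by case: (odd #|S :&: E'|); case: (odd #|S :&: O'|).
Qed.

Lemma a_im p (gp : good p) (S : {set 'I_n}) : aS (p @: S) = aS S.
Proof. by rewrite /aS P0_im. Qed.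

Lemma ev_im p (gp : good p) (S : {set 'I_n}) : ev (p @: S) = ev S.
Proof. by rewrite /ev card_im. Qed.

Lemma a_false (S : {set 'I_n}) : ~~ aS S -> sg @: S = tu @: S.
Proof.
rewrite /aS cardP0 => h.
have e : (o0 \in S) = (o1 \in S) by move: h; case: (o0 \in S); case: (o1 \in S).
apply/setP => y; rewrite (mem_im good_sg) (mem_im good_tu).
case: y => [[|[|k]] hk].
- rewrite (_ : sg _ = o1); last by apply: val_inj; rewrite sg_val.
  rewrite (_ : tu _ = o0); last by apply: val_inj; rewrite tu_val.
  by rewrite e.
- rewrite (_ : sg _ = o0); last by apply: val_inj; rewrite sg_val.
  rewrite (_ : tu _ = o1); last by apply: val_inj; rewrite tu_val.
  by rewrite e.
- by rewrite (_ : sg _ = tu (Ordinal hk)) //; apply: val_inj; rewrite sg_val tu_val.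
Qed.

Lemma sg_nofix x : sg x != x.
Proof.
apply/eqP => /(congr1 val); rewrite sg_val; case: x => [[|k] hk] /=; [lia|case: (odd k) => /=; lia].
Qed.

Definition phi (S : {set 'I_n}) := if aS S && cS S then tu @: (sg @: S) else S.
Definition psi (S : {set 'I_n}) := if aS S && cS S then sg @: (tu @: S) else S.

Lemma ev_phi (S : {set 'I_n}) : ev S -> ev (phi S).
Proof. by rewrite /phi; case: ifP => // _; rewrite (ev_im good_tu) (ev_im good_sg). Qed.

Lemma phi_comm (S : {set 'I_n}) : ev S -> phi (sg @: S) = tu @: (phi S).
Proof.
move=> hS; rewrite /phi (a_im good_sg); case ha: (aS S) => /=; last first.
  by apply: a_false; rewrite ha.
rewrite (c_flip good_sg) //; case hc: (cS S) => /=.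
  by rewrite (imK good_tu).
by rewrite (imK good_sg).
Qed.

Lemma psi_phi (S : {set 'I_n}) : ev S -> psi (phi S) = S.
Proof.
move=> hS; rewrite /phi; case h: (aS S && cS S); last by rewrite /psi h.
move/andP: h => [ha hc].
have hs : ev (sg @: S) by rewrite (ev_im good_sg).
have has : aS (sg @: S) by rewrite (a_im good_sg).
rewrite /psi (a_im good_tu) has /= (c_flip good_tu) // (c_flip good_sg) // hc /=.
by rewrite (imK good_tu) (imK good_sg).
Qed.

Definition mat (f : {set 'I_n} -> {set 'I_n}) : 'M[algC]_#|even_subsets n| :=
  \matrix_(i, j) ((f (enum_val j) == enum_val i)%:R).

Lemma evP (S : {set 'I_n}) : (S \in even_subsets n) = ev S.
Proof. by rewrite inE. Qed.

Lemma ev_enum (j : 'I_#|even_subsets n|) : ev (enum_val j).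
Proof. by rewrite -evP enum_valP. Qed.

Lemma mat_mul f g : (forall S, ev S -> ev (f S)) -> mat g *m mat f = mat (g \o f).
Proof.
move=> hf; apply/matrixP => i k; rewrite !mxE.
have hk : f (enum_val k) \in even_subsets n by rewrite evP hf // ev_enum.
rewrite (bigD1 (enum_rank_in hk (f (enum_val k)))) //= !mxE enum_rankK_in // eqxx mulr1.
rewrite big1 ?addr0 // => j nj; rewrite !mxE.
case: (eqVneq (f (enum_val k)) (enum_val j)) => [e|_]; last by rewrite mulr0.
move/eqP: nj => nj; exfalso; apply: nj; apply: enum_val_inj; by rewrite enum_rankK_in.
Qed.

Lemma mat_ext f g : (forall S, ev S -> f S = g S) -> mat f = mat g.
Proof. by move=> h; apply/matrixP => i j; rewrite !mxE h // ev_enum. Qed.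

Lemma mat_id : mat id = 1%:M.
Proof.
apply/matrixP => i j; rewrite !mxE /= (inj_eq enum_val_inj) eq_sym //.
Qed.

Lemma sim : similar_in unitmx (even_subset_rep sg) (even_subset_rep tu).
Proof.
have -> : even_subset_rep sg = mat (fun S => sg @: S) by [].
have -> : even_subset_rep tu = mat (fun S => tu @: S) by [].
have inv : mat psi *m mat phi = 1%:M.
  by rewrite mat_mul; [rewrite -mat_id; apply: mat_ext => S hS; rewrite /= psi_phi | exact: ev_phi].
have [_ U] := mulmx1_unit inv.
exists (mat phi) => //.
have comm : mat phi *m mat (fun S => sg @: S) = mat (fun S => tu @: S) *m mat phi.
  rewrite !mat_mul; [|exact: ev_phi|by move=> S hS; rewrite (ev_im good_sg)].
  by apply: mat_ext => S hS /=; rewrite phi_comm.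
rewrite /similar_to /conjmx /= pinvmxE // comm mulmxK //.
Qed.

Lemma notconj : sg \notin (tu ^: [set: {perm 'I_n}])%g.
Proof.
apply/imsetP => -[y _ e].
have tu0 : tu o0 = o0 by apply: val_inj; rewrite tu_val.
have := sg_nofix (y o0); rewrite e conjgE !permM permK tu0 eqxx //.
Qed.

End S.

Theorem mainTheorem15 (n : nat) (n_ge2 : (2 <= n)%N) (n_even : ~~ odd n) :
  unites_classes (@even_subset_rep n) /\
  (sigma_pairs n \notin (tau_pairs n ^: [set: {perm 'I_n}])%g /\
   similar_in unitmx (even_subset_rep (sigma_pairs n))
                     (even_subset_rep (tau_pairs n))).
Proof.
case: n n_ge2 n_even => [|[|m]] // _ hm.
rewrite /= negbK in hm.
have nc := notconj hm; have sm := sim hm.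
split; last by split.
by exists (sg m), (tu m).
Qed.
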